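(* Let $\mathcal{A}$ and $\mathcal{U}$ be Banach algebras, $\theta$ a nonzero character on $\mathcal{A}$, and $\mathcal{X}$ a simple Banach $(\mathcal{A}\times_{\theta}\mathcal{U})$-bimodule. Let $D:\mathcal{A}\times_{\theta}\mathcal{U}\to\mathcal{X}$ be a derivation and $\delta_1(a)=D((a,0))$. Then either $\delta_1$ is continuous or $\mathrm{ann}_{\mathcal{X}}\mathcal{U}=\mathcal{X}$.
   Context: The Lau product $\mathcal{A}\times_{\theta}\mathcal{U}$ is $\mathcal{A}\times\mathcal{U}$ with norm $\|(a,u)\|=\|a\|+\|u\|$ and product $(a,u)(a',u')=(aa',\theta(a)u'+\theta(a')u+uu')$. $\mathcal{X}$ is an $\mathcal{A}$-bimodule via $ax=(a,0)x$, $xa=x(a,0)$ and a $\mathcal{U}$-bimodule via $ux=(0,u)x$, $xu=x(0,u)$. Simple means the only closed $(\mathcal{A}\times_{\theta}\mathcal{U})$-subbimodules of $\mathcal{X}$ are $\{0\}$ and $\mathcal{X}$. $\mathrm{ann}_{\mathcal{X}}\mathcal{U}=\{x: ux=xu=0\ \forall u\in\mathcal{U}\}$. *)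

(* Defs.v *)
From HB Require Import structures.
From mathcomp Require Import all_boot all_order all_algebra.
From mathcomp Require Import all_classical all_reals all_analysis.
From mathcomp Require Import complex.
Set Implicit Arguments. Unset Strict Implicit. Unset Printing Implicit Defensive.
Import Order.TTheory GRing.Theory Num.Theory.
Local Open Scope ring_scope.
Local Open Scope complex_scope.
Local Open Scope classical_set_scope.

Section Defs.
Variable R : realType.
Local Notation C := (R[i]).

Definition is_banach_algebra (A : completeNormedModType C) (mul : A -> A -> A) : Prop :=
  [/\ (forall a b c, mul a (mul b c) = mul (mul a b) c),
      (forall (k : C) a b c, mul (k *: a + b) c = k *: mul a c + mul b c),
      (forall (k : C) a b c, mul a (k *: b + c) = k *: mul a b + mul a c)
    & (forall a b, `|mul a b| <= `|a| * `|b|)].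

(* A character: a nonzero(-ness is stated separately) multiplicative linear
   functional A -> C. *)
Definition is_character (A : completeNormedModType C) (mul : A -> A -> A)
    (theta : A -> C) : Prop :=
  (forall (k : C) a b, theta (k *: a + b) = k * theta a + theta b) /\
  (forall a b, theta (mul a b) = theta a * theta b).

Definition lau_mul (A U : completeNormedModType C) (mulA : A -> A -> A)
    (mulU : U -> U -> U) (theta : A -> C) (p q : A * U) : A * U :=
  (mulA p.1 q.1, theta p.1 *: q.2 + theta q.1 *: p.2 + mulU p.2 q.2).

Definition lau_norm (A U : completeNormedModType C) (p : A * U) : C :=
  `|p.1| + `|p.2|.

Definition lau_lin (A U : completeNormedModType C) (k : C) (p q : A * U) : A * U :=
  (k *: p.1 + q.1, k *: p.2 + q.2).

Definition is_banach_bimodule (A U : completeNormedModType C)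
    (mulA : A -> A -> A) (mulU : U -> U -> U) (theta : A -> C)
    (X : completeNormedModType C)
    (lact : A * U -> X -> X) (ract : X -> A * U -> X) : Prop :=
  let m := lau_mul mulA mulU theta in
  [/\ (forall (k : C) p q x, lact (lau_lin k p q) x = k *: lact p x + lact q x),
      (forall (k : C) p x y, lact p (k *: x + y) = k *: lact p x + lact p y),
      (forall (k : C) p q x, ract x (lau_lin k p q) = k *: ract x p + ract x q)
    & (forall (k : C) p x y, ract (k *: x + y) p = k *: ract x p + ract y p)] /\
  [/\ (forall p q x, lact (m p q) x = lact p (lact q x)),
      (forall p q x, ract x (m p q) = ract (ract x p) q),
      (forall p q x, ract (lact p x) q = lact p (ract x q))
    & exists M : C, forall p x,
        `|lact p x| <= M * (lau_norm p * `|x|) /\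
        `|ract x p| <= M * (lau_norm p * `|x|)].

Definition is_subbimodule (A U X : completeNormedModType C)
    (lact : A * U -> X -> X) (ract : X -> A * U -> X) (S : set X) : Prop :=
  [/\ S 0,
      (forall (k : C) x y, S x -> S y -> S (k *: x + y)),
      (forall p x, S x -> S (lact p x))
    & (forall p x, S x -> S (ract x p))].

Definition is_simple_bimodule (A U X : completeNormedModType C)
    (lact : A * U -> X -> X) (ract : X -> A * U -> X) : Prop :=
  forall S : set X, closed S -> is_subbimodule lact ract S ->
    S = [set 0] \/ S = setT.

Definition is_derivation (A U : completeNormedModType C)
    (mulA : A -> A -> A) (mulU : U -> U -> U) (theta : A -> C)
    (X : completeNormedModType C)
    (lact : A * U -> X -> X) (ract : X -> A * U -> X) (D : A * U -> X) : Prop :=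
  (forall (k : C) p q, D (lau_lin k p q) = k *: D p + D q) /\
  (forall p q, D (lau_mul mulA mulU theta p q) = lact p (D q) + ract (D p) q).

Definition ann_U (A U X : completeNormedModType C)
    (lact : A * U -> X -> X) (ract : X -> A * U -> X) : set X :=
  [set x | forall u : U, lact (0, u) x = 0 /\ ract x (0, u) = 0].

End Defs.

(* Main.v *)
Require Import Defs.
From HB Require Import structures.
From mathcomp Require Import all_boot all_order all_algebra.
From mathcomp Require Import all_classical all_reals all_analysis.
From mathcomp Require Import complex.
From mathcomp Require Import ring lra.
Set Implicit Arguments. Unset Strict Implicit. Unset Printing Implicit Defensive.
Import Order.TTheory GRing.Theory Num.Theory.
Import numFieldNormedType.Exports.
Local Open Scope ring_scope.
Local Open Scope complex_scope.
Local Open Scope classical_set_scope.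

Definition realify (R : realType) (V : Type) : Type := V.

Lemma Re_norm_ge0 (R : realType) (V : normedModType R[i]) (x : V) : 0 <= complex.Re `|x|.
Proof. by have := normr_ge0 x; rewrite lecE /= => /andP[]. Qed.

Lemma normC_real (R : realType) (V : normedModType R[i]) (x : V) : `|x| = (complex.Re `|x|)%:C.
Proof.
have := normr_ge0 x; rewrite lecE /= => /andP[/eqP Hi _].
by rewrite [LHS]complexE Hi mulr0 addr0.
Qed.

Lemma Re_le (R : realType) (a b : R[i]) : a <= b -> complex.Re a <= complex.Re b.
Proof. by rewrite lecE => /andP[]. Qed.

HB.instance Definition _ (R : realType) (V : normedModType R[i]) :=
  GRing.Zmodule.copy (realify R V) V.

Definition rscale (R : realType) (V : normedModType R[i]) (k : R) (x : realify R V) : realify R V :=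
  (k%:C *: (x : V) : V).

Lemma rscaleA (R : realType) (V : normedModType R[i]) a b (v : realify R V) :
  rscale a (rscale b v) = rscale (a * b) v.
Proof. by rewrite /rscale scalerA; congr (_ *: _); rewrite rmorphM. Qed.
Lemma rscale1 (R : realType) (V : normedModType R[i]) : left_id 1 (@rscale R V).
Proof. by move=> v; rewrite /rscale scale1r. Qed.
Lemma rscaleDr (R : realType) (V : normedModType R[i]) : right_distributive (@rscale R V) +%R.
Proof. by move=> a u v; rewrite /rscale scalerDr. Qed.
Lemma rscaleDl (R : realType) (V : normedModType R[i]) (v : realify R V) :
  {morph (@rscale R V)^~ v: a b / a + b}.
Proof. by move=> a b; rewrite /rscale rmorphD scalerDl. Qed.

HB.instance Definition _ (R : realType) (V : normedModType R[i]) :=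
  GRing.Zmodule_isLmodule.Build R (realify R V) (@rscaleA R V) (@rscale1 R V)
    (@rscaleDr R V) (@rscaleDl R V).

Definition rnorm (R : realType) (V : normedModType R[i]) (x : realify R V) : R := complex.Re `|(x : V)|.

Lemma rnormD (R : realType) (V : normedModType R[i]) (x y : realify R V) :
  rnorm (x + y) <= rnorm x + rnorm y.
Proof. by rewrite /rnorm -raddfD /=; apply: Re_le; apply: ler_normD. Qed.

Lemma rnormZ (R : realType) (V : normedModType R[i]) (l : R) (x : realify R V) :
  rnorm (l *: x) = `|l| * rnorm x.
Proof.
rewrite /rnorm /GRing.scale /= /rscale normrZ (normC_real x).
rewrite normc_def /= expr0n /= addr0 sqrtr_sqr.
by rewrite /rnorm /= mulr0 subr0.
Qed.

Lemma rnorm0 (R : realType) (V : normedModType R[i]) (x : realify R V) :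
  rnorm x = 0 -> x = 0.
Proof. by rewrite /rnorm => H; apply/(@normr0_eq0 _ V); rewrite normC_real H. Qed.

HB.instance Definition _ (R : realType) (V : normedModType R[i]) :=
  Lmodule_isNormed.Build R (realify R V) (@rnormD R V) (@rnormZ R V) (@rnorm0 R V).


Lemma realify_normE (R : realType) (V : normedModType R[i]) (x : realify R V) :
  `|x| = complex.Re `|(x : V)|.
Proof. by []. Qed.

Lemma realify_complete (R : realType) (V : completeNormedModType R[i])
  (F : set_system (realify R V)) : ProperFilter F -> cauchy F -> cvg F.
Proof.
move=> FF /cauchyP Fc.
have FV : ProperFilter (F : set_system V) by exact: FF.
have : cvg (F : set_system V).
  apply: (@cauchy_cvg V F FV); apply: (@cauchy_exP R[i] V F FV) => eps eps0.
  have e0 : 0 < complex.Re eps by move: eps0; rewrite ltcE => /andP[].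
  have [x Fx] := Fc _ e0; exists x.
  apply: filterS Fx => y; rewrite -!ball_normE /ball_ /= realify_normE => H.
  move: eps0; rewrite ltcE => /andP[/eqP Hi _].
  have Hi' : complex.Im eps = 0 by rewrite Hi.
  by rewrite (normC_real (x - y : V)) ltcE /= Hi' eqxx /= H.
move=> /cvg_ex [l Hl]; apply/cvg_ex; exists (l : realify R V).
apply/cvgrPdist_lt => e e0.
have /cvgrPdist_lt /(_ (e%:C)) : (F : set_system V) --> (l : V) by exact: Hl.
rewrite ltcR => /(_ e0); apply: filterS => y.
by rewrite realify_normE (normC_real (l - y : V)) ltcR.
Qed.

HB.instance Definition _ (R : realType) (V : completeNormedModType R[i]) :=
  Uniform_isComplete.Build (realify R V) (@realify_complete R V).


Lemma cg_baire (R : realType) (V : completeNormedModType R) (S : nat -> set V) :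
  (forall x, exists n, S n x) ->
  exists n x0 (r : R), 0 < r /\ ball x0 r `<=` closure (S n).
Proof.
move=> cover.
pose O := fun n => ~` closure (S n).
have O_open n : open (O n) by apply: closed_openC; exact: closed_closure.
have O_inf : \bigcap_i O i = set0.
  rewrite -subset0 => x Hx; have [n Sn] := cover x.
  by apply: (Hx n Logic.I); apply: subset_closure.
have [[n nd]|H] := pselect (exists n, ~ dense (O n)); last first.
  exfalso; have : dense (\bigcap_i O i).
    apply: Baire => i; split => //; apply: contrapT => Hi; apply: H; by exists i.
  rewrite O_inf => /(_ setT) [||x [_ []]]; [by exists 0|exact: openT].
move: (denseNE nd) => [W0 [[x /open_nbhs_nbhs /nbhs_ballP [r r0 bxr]] W0On]].
exists n, x, r; split => // y /bxr W0y.
apply: contrapT => ncl; have : (W0 `&` O n) y by split.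
by rewrite W0On.
Qed.

Lemma closure_approx (R : realType) (V : normedModType R) (S : set V) p e :
  closure S p -> 0 < e -> exists s, S s /\ `|p - s| < e.
Proof.
move=> cl e0; have [s [Ss Bs]] := cl _ (@nbhsx_ballx _ _ p e e0).
by exists s; split => //; move: Bs; rewrite -ball_normE.
Qed.

Lemma zmodE1 (V : zmodType) (x a b c : V) : (x + a - b) - (x - c) = a - (b - c).
Proof. by rewrite -[x + a - b]addrA (addrC x (a - b)) addrKA opprK opprB addrA addrAC. Qed.

Lemma cg_step (R : realType) (V W : completeNormedModType R) (T : {linear V -> W}) :
  exists c : R, 0 <= c /\
    forall z e, 0 < e -> exists a, `|z - a| < e /\ `|T a| <= c * `|z|.
Proof.
pose S := fun n : nat => [set a : V | `|T a| <= n%:R].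
have cover : forall x, exists n, S n x.
  move=> x; exists (Num.Def.trunc `|T x|).+1; rewrite /S /=.
  exact/ltW/truncnS_gt.
have [n [x0 [r [r0 sub]]]] := cg_baire cover.
exists (4 * n%:R / r); split; first by apply: divr_ge0; [apply: mulr_ge0|apply: ltW].
move=> z e e0.
have [->|z0] := eqVneq z 0.
  by exists 0; rewrite subr0 normr0 e0 linear0 normr0 mulr0.
have nz0 : 0 < `|z| by rewrite normr_gt0.
pose l := r / (2 * `|z|).
have l0 : 0 < l by rewrite divr_gt0 // mulr_gt0.
pose z' := l *: z.
have hz' : ball x0 r (x0 + z').
  rewrite -ball_normE /= opprD addrA subrr sub0r normrN normrZ gtr0_norm //.
  have -> : l * `|z| = r / 2 by rewrite /l; field; rewrite gt_eqF.
  lra.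
have hx0 : ball x0 r x0 by apply: ballxx.
have e'0 : 0 < l * e / 2 by rewrite divr_gt0 // mulr_gt0.
have [s1 [S1 H1]] := closure_approx (sub _ hz') e'0.
have [s2 [S2 H2]] := closure_approx (sub _ hx0) e'0.
exists (l^-1 *: (s1 - s2)); split.
  have -> : z - l^-1 *: (s1 - s2) = l^-1 *: ((x0 + z' - s1) - (x0 - s2)).
    have -> : (x0 + z' - s1) - (x0 - s2) = z' - (s1 - s2).
      exact: zmodE1.
    by rewrite [RHS]scalerBr /z' scalerA mulVf ?gt_eqF // scale1r.
  rewrite normrZ normfV gtr0_norm // mulrC ltr_pdivrMr //.
  have := ler_normB (x0 + z' - s1) (x0 - s2); lra.
rewrite linearZ linearB normrZ normfV gtr0_norm //=.
have := ler_normB (T s1) (T s2); rewrite /S /= in S1 S2 => Hn.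
have -> : 4 * n%:R / r * `|z| = l^-1 * (2 * n%:R).
  by rewrite /l; field; rewrite !gt_eqF.
rewrite ler_pM2l ?invr_gt0 //; lra.
Qed.

Lemma series0 (V : zmodType) (u : V ^nat) : series u 0 = 0.
Proof. by rewrite seriesEnat /= big_geq. Qed.

Lemma cg_ball (R : realType) (V W : completeNormedModType R) (T : {linear V -> W}) :
  (forall (u : nat -> V) (y : W), u @ \oo --> 0 -> (T \o u) @ \oo --> y -> y = 0) ->
  exists c : R, 0 <= c /\ forall z, `|z| < 1 -> `|T z| <= 2 * c.
Proof.
move=> CG.
have [c [c0 Hc]] := cg_step T.
exists c; split => // z z1.
have h2 : (0 : R) < 2^-1 by rewrite invr_gt0.
have : forall p : V * nat, exists a, `|p.1 - a| < (2^-1) ^+ p.2.+1 /\ `|T a| <= c * `|p.1|.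
  by move=> [x k]; apply: Hc; apply: exprn_gt0.
move=> /choice [g Hg].
pose fix xs k := if k is k'.+1 then xs k' - g (xs k', k') else z.
have xs_lt : forall k, `|xs k| < (2^-1)^+k.
  by elim => [|k IH] /=; [rewrite expr0 | have [H _] := Hg (xs k, k)].
pose a k := g (xs k, k).
have Ta_le k : `|T (a k)| <= geometric c (2^-1) k.
  have [_ H] := Hg (xs k, k); rewrite /geometric /=; apply: (le_trans H).
  by apply: ler_wpM2l => //; apply: ltW (xs_lt k).
have ser n : series (T \o a) n = T z - T (xs n).
  elim: n => [|n IH]; first by rewrite series0 /= subrr.
  by rewrite seriesSr IH /= /a linearB opprB addrA addrAC.
have ser_le n : `|series (T \o a) n| <= series (geometric c (2^-1)) n.
  elim: n => [|n IH]; first by rewrite !series0 normr0.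
  rewrite !seriesSr; apply: (le_trans (ler_normD _ _)); exact: lerD IH (Ta_le n).
have gcvg : cvgn (series (geometric c (2^-1))).
  by apply: is_cvg_geometric_series; rewrite gtr0_norm // invf_lt1 // ltr1n.
have g0 : forall n, 0 <= geometric c (2^-1) n.
  by move=> n; apply: geometric_ge0 => //; apply: ltW.
have ncvg := @series_le_cvg R (fun n => `|(T \o a) n|) (geometric c (2^-1))
  (fun n => normr_ge0 _) g0 Ta_le gcvg.
have scvg := normed_cvg ncvg.
set L := limn (series (T \o a)) in scvg.
have Txs : (T \o xs) @ \oo --> T z - L.
  have -> : T \o xs = (fun n => T z - series (T \o a) n).
    by apply/funext => n /=; rewrite ser opprB addrC subrK.
  by apply: cvgB => //; apply: cvg_cst.
have xs0 : xs @ \oo --> 0.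
  apply/cvgr0Pnorm_lt => eps eps0.
  have := @cvg_geometric R 1 (2^-1); rewrite gtr0_norm // invf_lt1 // ltr1n => /(_ isT).
  move=> /cvgr0Pnorm_lt /(_ eps eps0); apply: filterS => n /=.
  rewrite mul1r gtr0_norm ?exprn_gt0 // => H; exact: lt_trans (xs_lt n) H.
have := CG _ _ xs0 Txs => /eqP; rewrite subr_eq0 => /eqP ->.
have Hn : `|series (T \o a) n| @[n --> \oo] --> `|L| by apply: cvg_norm scvg.
apply: (cvgr_to_le Hn).
apply: nearW => n; apply: (le_trans (ser_le n)).
apply: (le_trans (geometric_le_lim _ _ _ _)) => //.
- by rewrite gtr0_norm // invf_lt1 // ltr1n.
- have -> : c / (1 - 2^-1) = 2 * c by field.
  by [].
Qed.

Lemma closed_graph (R : realType) (V W : completeNormedModType R) (T : {linear V -> W}) :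
  (forall (u : nat -> V) (y : W), u @ \oo --> 0 -> (T \o u) @ \oo --> y -> y = 0) ->
  exists M : R, 0 < M /\ forall x, `|T x| <= M * `|x|.
Proof.
move=> CG; have [c [c0 Hc]] := cg_ball CG.
exists (4 * c + 1); split; first lra.
move=> x; have [->|x0] := eqVneq x 0.
  by rewrite linear0 !normr0 mulr0.
have nx : 0 < `|x| by rewrite normr_gt0.
pose w := (2 * `|x|)^-1 *: x.
have w1 : `|w| < 1.
  rewrite /w normrZ normfV gtr0_norm ?mulr_gt0 //.
  have -> : (2 * `|x|)^-1 * `|x| = 2^-1 by field; rewrite gt_eqF.
  by rewrite invf_lt1 // ltr1n.
have Hw := Hc _ w1.
have Ex : T x = (2 * `|x|) *: T w.
  by rewrite /w linearZ scalerA mulfV ?scale1r // mulf_neq0 // gt_eqF.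
rewrite Ex normrZ gtr0_norm ?mulr_gt0 //.
nra.
Qed.

Lemma normC_realC (R : realType) (z : R[i]) : `|z| = (complex.Re `|z|)%:C.
Proof.
have := normr_ge0 z; rewrite lecE /= => /andP[/eqP Hi _].
by rewrite [LHS]complexE Hi mulr0 addr0.
Qed.

Lemma Re_mulC (R : realType) (p q : R) : complex.Re (p%:C * q%:C) = p * q.
Proof. by rewrite -rmorphM. Qed.

Lemma Re_invC (R : realType) (p : R) : complex.Re (p%:C)^-1 = p^-1.
Proof. by rewrite -fmorphV. Qed.

Lemma bmul_addr (R : realType) (A : completeNormedModType R[i]) (mul : A -> A -> A) :
  is_banach_algebra mul -> forall a x y, mul a (x + y) = mul a x + mul a y.
Proof. rewrite /is_banach_algebra => -[_ _ H _] a x y.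
by have := H 1 a x y; rewrite !scale1r. Qed.

Lemma bmul_0r (R : realType) (A : completeNormedModType R[i]) (mul : A -> A -> A) :
  is_banach_algebra mul -> forall a, mul a 0 = 0.
Proof.
move=> H a; have h := bmul_addr H a 0 0; rewrite addr0 in h.
by apply: (@addrI _ (mul a 0)); rewrite -h addr0.
Qed.

Lemma bmul_oppr (R : realType) (A : completeNormedModType R[i]) (mul : A -> A -> A) :
  is_banach_algebra mul -> forall a x, mul a (- x) = - mul a x.
Proof.
move=> H a x; apply: (@addrI _ (mul a x)); rewrite -bmul_addr // !subrr.
exact: bmul_0r.
Qed.

Lemma bmul_subr (R : realType) (A : completeNormedModType R[i]) (mul : A -> A -> A) :
  is_banach_algebra mul -> forall a x y, mul a (x - y) = mul a x - mul a y.
Proof. by move=> H a x y; rewrite bmul_addr // bmul_oppr. Qed.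

Lemma chi_lin (R : realType) (A : completeNormedModType R[i]) (mul : A -> A -> A) th :
  is_character mul th ->
  [/\ th 0 = 0, (forall x y, th (x + y) = th x + th y),
      (forall k x, th (k *: x) = k * th x) & (forall x y, th (x - y) = th x - th y)].
Proof.
rewrite /is_character => -[L _].
have th0 : th 0 = 0.
  have := L 1 0 0; rewrite scaler0 addr0 mul1r => h.
  by apply: (@addrI _ (th 0)); rewrite -h addr0.
have thD x y : th (x + y) = th x + th y by have := L 1 x y; rewrite scale1r mul1r.
have thZ k x : th (k *: x) = k * th x by rewrite -[k *: x]addr0 L th0 addr0.
have thN z : th (- z) = - th z by rewrite -(scaleN1r z) thZ mulN1r.
by split => // x y; rewrite thD thN.
Qed.

Lemma char_bound (R : realType) (A : completeNormedModType R[i]) (mul : A -> A -> A) th :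
  is_banach_algebra mul -> is_character mul th ->
  forall a, complex.Re `|th a| <= complex.Re `|a|.
Proof.
move=> BA CH a.
have [th0 thD thZ thB] := chi_lin CH.
have thM : forall x y, th (mul x y) = th x * th y by case: CH.
have subm : forall x y, complex.Re `|mul x y| <= complex.Re `|x| * complex.Re `|y|.
  move=> x y; case: BA => _ _ _ H; have := Re_le (H x y).
  by rewrite (normC_real x) (normC_real y) Re_mulC.
rewrite leNgt; apply/negP => Hlt.
have ta0 : 0 < complex.Re `|th a| by apply: le_lt_trans Hlt; apply: Re_norm_ge0.
have tha0 : th a != 0.
  by apply: contraTneq ta0 => ->; rewrite normr0 /= ltxx.
pose b := (th a)^-1 *: a.
have thb : th b = 1 by rewrite /b thZ mulVf.
have nb : complex.Re `|b| < 1.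
  rewrite /b normrZ normfV (normC_realC (th a)) (normC_real a) -fmorphV -rmorphM /=.
  by rewrite mulrC ltr_pdivrMr // mul1r.
have nb0 : 0 <= complex.Re `|b| by apply: Re_norm_ge0.
pose fix pw (n : nat) : realify R A := if n is n'.+1 then (mul b (pw n') : realify R A) else (b : realify R A).
have pw_le n : `|pw n| <= complex.Re `|b| ^+ n.+1.
  elim: n => [|n IH]; first by rewrite expr1 realify_normE.
  rewrite realify_normE /=; apply: (le_trans (subm _ _)).
  by rewrite exprS; apply: ler_wpM2l.
have thpw n : th (pw n) = 1.
  by elim: n => [|n IH] //=; rewrite thM IH thb mulr1.
have gcvg : cvgn (series (geometric (complex.Re `|b|) (complex.Re `|b|))).
  by apply: is_cvg_geometric_series; rewrite ger0_norm.
have g0 : forall n, 0 <= geometric (complex.Re `|b|) (complex.Re `|b|) n.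
  by move=> n; apply: geometric_ge0.
have pw_le' n : `|pw n| <= geometric (complex.Re `|b|) (complex.Re `|b|) n.
  by rewrite /geometric /= -exprS.
have ncvg := @series_le_cvg R (fun n => `|pw n|) _
  (fun n => normr_ge0 _) g0 pw_le' gcvg.
have scvg := normed_cvg ncvg.
set c := limn (series pw) in scvg.
have H2 : (fun n => series pw n.+1 - (b : realify R A)) @ \oo --> c - (b : realify R A).
  apply: cvgB; last exact: cvg_cst.
  by rewrite (cvg_shiftS (series pw)).
have rel n : (mul b (series pw n) : realify R A) = series pw n.+1 - (b : realify R A).
  elim: n => [|n IH].
    by rewrite series0 seriesSr series0 add0r subrr; apply: bmul_0r.
  rewrite [in LHS]seriesSr (bmul_addr BA) IH [in RHS]seriesSr.
  by rewrite addrAC.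
have H3 : (fun n => (mul b (series pw n) : realify R A)) @ \oo --> (mul b c : realify R A).
  apply/cvgrPdist_lt => eps eps0.
  move/cvgrPdist_lt: scvg => /(_ eps eps0); apply: filterS => n Hn.
  rewrite realify_normE -(bmul_subr BA); apply: (le_lt_trans (subm _ _)).
  apply: (le_lt_trans _ Hn); rewrite realify_normE.
  by rewrite ler_piMl // ?Re_norm_ge0 // ltW.
have E : (mul b c : realify R A) = c - b.
  have H2' : (fun n => (mul b (series pw n) : realify R A)) @ \oo --> c - b.
    by rewrite (funext rel).
  exact: cvg_unique H3 H2'.
have := congr1 th E; rewrite thM thb mul1r thB thb => h.
have := subrr (th c); rewrite {2}h opprB addrC subrK => /eqP.
by rewrite oner_eq0.
Qed.


Lemma bmul_0l (R : realType) (A : completeNormedModType R[i]) (mul : A -> A -> A) :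
  is_banach_algebra mul -> forall a, mul 0 a = 0.
Proof.
rewrite /is_banach_algebra => -[_ H _ _] a; have := H 1 0 0 a.
rewrite scale1r addr0 scale1r => h.
by apply: (@addrI _ (mul 0 a)); rewrite -h addr0.
Qed.

Lemma Re_mulr (R : realType) (z : R[i]) (r : R) : complex.Re (z * r%:C) = complex.Re z * r.
Proof. by case: z => x y; rewrite /= mulr0 subr0. Qed.

Lemma Re_normZ (R : realType) (V : normedModType R[i]) (k : R[i]) (x : V) :
  complex.Re `|k *: x| = complex.Re `|k| * complex.Re `|x|.
Proof. by rewrite normrZ (normC_realC k) (normC_real x) Re_mulC. Qed.

Lemma norm_ltC (R : realType) (V : normedModType R[i]) (x : V) (e : R) :
  complex.Re `|x| < e -> `|x| < e%:C.
Proof. by rewrite (normC_real x) ltcR. Qed.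

Lemma Re_le0_eq0 (R : realType) (V : normedModType R[i]) (x : V) :
  complex.Re `|x| <= 0 -> x = 0.
Proof.
move=> h; have h0 := Re_norm_ge0 x.
have : complex.Re `|x| = 0 by apply/eqP; rewrite eq_le h h0.
by move=> e; apply/normr0_eq0; rewrite normC_real e.
Qed.

Lemma closure_approxC (R : realType) (V : normedModType R[i]) (S : set V) p (e : R) :
  closure S p -> 0 < e -> exists s, S s /\ complex.Re `|p - s| < e.
Proof.
move=> cl e0; have e0' : 0 < e%:C by rewrite ltcR.
have [s [Ss Bs]] := cl _ (@nbhsx_ballx _ _ p _ e0').
exists s; split => //; move: Bs; rewrite -ball_normE /= (normC_real (p - s)) ltcR //.
Qed.

Lemma lau_mul0l (R : realType) (A U : completeNormedModType R[i]) (mulA : A -> A -> A)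
  (mulU : U -> U -> U) th u p :
  is_banach_algebra mulA -> is_character mulA th ->
  lau_mul mulA mulU th (0, u) p = (0, th p.1 *: u + mulU u p.2).
Proof.
move=> BA CH; have [th0 _ _ _] := chi_lin CH.
by rewrite /lau_mul /= bmul_0l // th0 scale0r add0r.
Qed.

Lemma lau_mulr0 (R : realType) (A U : completeNormedModType R[i]) (mulA : A -> A -> A)
  (mulU : U -> U -> U) th u p :
  is_banach_algebra mulA -> is_character mulA th ->
  lau_mul mulA mulU th p (0, u) = (0, th p.1 *: u + mulU p.2 u).
Proof.
move=> BA CH; have [th0 _ _ _] := chi_lin CH.
by rewrite /lau_mul /= bmul_0r // th0 scale0r addr0.
Qed.

Lemma le0_small (R : realFieldType) (a : R) : (forall e, 0 < e -> a <= e) -> a <= 0.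
Proof.
move=> H; rewrite leNgt; apply/negP => a0.
have := H (a / 2); rewrite divr_gt0 // => /(_ isT); lra.
Qed.

Lemma closed_kernel (R : realType) (V W : normedModType R[i]) (f : V -> W) (C : R) :
  (forall x y, f (x - y) = f x - f y) ->
  (forall z, complex.Re `|f z| <= C * complex.Re `|z|) ->
  closed [set x | f x = 0].
Proof.
move=> fB fC x cl; apply: Re_le0_eq0; apply: le0_small => e e0.
have d0 : 0 < e / (`|C| + 1) by rewrite divr_gt0 // ltr_wpDl.
have [s [/= fs0 hs]] := closure_approxC cl d0.
have -> : f x = f (x - s) by rewrite fB fs0 subr0.
apply: (le_trans (fC _)).
have n0 := Re_norm_ge0 (x - s).
have C0 : 0 <= `|C| by [].
have := ler_norm C.
move: hs; rewrite ltr_pdivlMr ?ltr_wpDl // => hs.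
nra.
Qed.

Lemma cvg_lin0 (R : realType) (a b : nat -> R) (C D : R) : a @ \oo --> 0 -> b @ \oo --> 0 -> (fun n => C * a n + D * b n) @ \oo --> 0.
Proof.
move=> ha hb.
have h : (fun n => C * a n + D * b n) @ \oo --> C * 0 + D * 0.
  by apply: cvgD; apply: cvgMl_tmp.
by rewrite !mulr0 addr0 in h.
Qed.

Lemma Re_normD (R : realType) (V : normedModType R[i]) (x y : V) :
  complex.Re `|x + y| <= complex.Re `|x| + complex.Re `|y|.
Proof. by rewrite -raddfD /=; apply: Re_le; apply: ler_normD. Qed.

Lemma Re_normB (R : realType) (V : normedModType R[i]) (x y : V) :
  complex.Re `|x - y| <= complex.Re `|x| + complex.Re `|y|.
Proof. by rewrite -raddfD /=; apply: Re_le; apply: ler_normB. Qed.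

Unset Implicit Arguments.

Theorem theorem2p8 (R : realType)
  (A U : completeNormedModType R[i])
  (mulA : A -> A -> A) (mulU : U -> U -> U) (theta : A -> R[i])
  (X : completeNormedModType R[i])
  (lact : A * U -> X -> X) (ract : X -> A * U -> X) (D : A * U -> X) :
  is_banach_algebra mulA -> is_banach_algebra mulU ->
  is_character mulA theta -> (exists a : A, theta a != 0) ->
  is_banach_bimodule mulA mulU theta lact ract ->
  is_simple_bimodule lact ract ->
  is_derivation mulA mulU theta lact ract D ->
  continuous (fun a : A => D (a, 0)) \/ ann_U lact ract = setT.
Proof.
move=> BA BU CH _ [[lL lR rL rR] [lM rM mid [M HM]]] SIMP [Dlin Dmul].
have [th0 thD thZ thB] := chi_lin CH.
have lact0 p : lact p 0 = 0.
  have := lR 1 p 0 0; rewrite scale1r addr0 scale1r => h.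
  by apply: (@addrI _ (lact p 0)); rewrite -h addr0.
have ract0 p : ract 0 p = 0.
  have := rR 1 p 0 0; rewrite scale1r addr0 scale1r => h.
  by apply: (@addrI _ (ract 0 p)); rewrite -h addr0.
have lactZ k p x : lact p (k *: x) = k *: lact p x.
  by have := lR k p x 0; rewrite addr0 lact0 addr0.
have ractZ k p x : ract (k *: x) p = k *: ract x p.
  by have := rR k p x 0; rewrite addr0 ract0 addr0.
have lactB p x y : lact p (x - y) = lact p x - lact p y.
  by have := lR (-1) p y x; rewrite scaleN1r addrC => ->; rewrite scaleN1r addrC.
have ractB p x y : ract (x - y) p = ract x p - ract y p.
  by have := rR (-1) p y x; rewrite scaleN1r addrC => ->; rewrite scaleN1r addrC.
have annS : is_subbimodule lact ract (ann_U lact ract).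
  split.
  - by move=> u; rewrite lact0 ract0.
  - by move=> k x y Hx Hy u; have [h1 h2] := Hx u; have [h3 h4] := Hy u; rewrite lR rR h1 h2 h3 h4 scaler0 addr0.
  - move=> p x Hx u; split.
      by rewrite -lM lau_mul0l //; have [-> _] := Hx (theta p.1 *: u + mulU u p.2).
    by rewrite mid; have [_ ->] := Hx u; rewrite lact0.
  - move=> p x Hx u; split.
      by rewrite -mid; have [-> _] := Hx u; rewrite ract0.
    by rewrite -rM lau_mulr0 //; have [_ ->] := Hx (theta p.1 *: u + mulU p.2 u).
pose K := `|complex.Re M| + 1.
have K0 : 0 < K by rewrite ltr_wpDl.
have lnE (p : A * U) (x : X) : lau_norm p * `|x| = ((complex.Re `|p.1| + complex.Re `|p.2|) * complex.Re `|x|)%:C.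
  by rewrite /lau_norm (normC_real p.1) (normC_real p.2) (normC_real x) -rmorphD -rmorphM.
have KM t : 0 <= t -> complex.Re M * t <= K * t.
  move=> t0; apply: ler_wpM2r => //; have := ler_norm (complex.Re M); rewrite /K; lra.
have ln0 (p : A * U) (x : X) : 0 <= (complex.Re `|p.1| + complex.Re `|p.2|) * complex.Re `|x|.
  by apply: mulr_ge0; [apply: addr_ge0|]; apply: Re_norm_ge0.
have HMl p x : complex.Re `|lact p x| <= K * (complex.Re `|p.1| + complex.Re `|p.2|) * complex.Re `|x|.
  have [h _] := HM p x; have := Re_le h; rewrite lnE Re_mulr => h'.
  by rewrite -mulrA; apply: (le_trans h'); apply: KM.
have HMr p x : complex.Re `|ract x p| <= K * (complex.Re `|p.1| + complex.Re `|p.2|) * complex.Re `|x|.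
  have [_ h] := HM p x; have := Re_le h; rewrite lnE Re_mulr => h'.
  by rewrite -mulrA; apply: (le_trans h'); apply: KM.
have annC : closed (ann_U lact ract).
  move=> x clx u; split.
    apply: (closed_kernel (f := lact (0, u)) (lactB _) (HMl _)).
    by apply: (closureS _ clx) => y /(_ u) [].
  apply: (closed_kernel (f := fun y => ract y (0, u)) (fun x y => ractB _ x y) (HMr _)).
  by apply: (closureS _ clx) => y /(_ u) [].
have [ann0|annT] := SIMP _ annC annS; last by right.
left.
have thb := char_bound BA CH.
have D00 : D (0, 0) = 0.
  have := Dlin 1 (0, 0) (0, 0); rewrite /lau_lin /= !scale1r !addr0 => h.
  by apply: (@addrI _ (D (0, 0))); rewrite -h addr0.
have DZ k v : D (0, k *: v) = k *: D (0, v).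
  by have := Dlin k (0, v) (0, 0); rewrite /lau_lin /= scaler0 !addr0 D00 addr0.
have I1 a v : ract (D (a, 0)) (0, v) = theta a *: D (0, v) - lact (a, 0) (D (0, v)).
  have := Dmul (a, 0) (0, v); rewrite lau_mulr0 //= bmul_0l // addr0 DZ => ->.
  by rewrite [lact _ _ + _]addrC addrK.
have I2 a v : lact (0, v) (D (a, 0)) = theta a *: D (0, v) - ract (D (0, v)) (a, 0).
  have := Dmul (0, v) (a, 0); rewrite lau_mul0l //= bmul_0r // addr0 DZ => ->.
  by rewrite addrK.
have dlin : linear (fun x : realify R A => (D ((x : A), 0) : realify R X)).
  move=> k x y /=.
  have := Dlin k%:C (x, 0) (y, 0); rewrite /lau_lin /= scaler0 addr0 => h.
  exact: h.
pose L : {linear realify R A -> realify R X} :=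
  HB.pack (fun x : realify R A => (D ((x : A), 0) : realify R X)) (GRing.isLinear.Build _ _ _ _ _ dlin).
have LE x : L x = D (x, 0) by [].
have CGh : forall (u : nat -> realify R A) (y : realify R X),
    u @ \oo --> 0 -> (L \o u) @ \oo --> y -> y = 0.
  move=> u y u0 Ly.
  have a0 : (fun n => `|y - L (u n)|) @ \oo --> (0 : R).
    have h : (fun n => `|y - L (u n)|) @ \oo --> `|y - y|.
      by apply: cvg_norm; apply: cvgB => //; apply: cvg_cst.
    by rewrite subrr normr0 in h.
  have b0 : (fun n => `|u n|) @ \oo --> (0 : R).
    have h : (fun n => `|u n|) @ \oo --> `|(0 : realify R A)| by apply: cvg_norm.
    by rewrite normr0 in h.
  have : [set 0] (y : X); last by [].
  rewrite -ann0 => v.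
  set w := D (0, v).
  have n00 : complex.Re `|(0 : A)| = 0 by rewrite normr0.
  have n0U : complex.Re `|(0 : U)| = 0 by rewrite normr0.
  pose Cv := K * (complex.Re `|(0 : A)| + complex.Re `|v|).
  pose C2 := (1 + K) * complex.Re `|w|.
  split.
    apply: Re_le0_eq0.
    apply: (cvgr_to_ge (cvg_lin0 Cv C2 a0 b0)); apply: nearW => n.
    have e1 : lact (0, v) y = lact (0, v) (y - D (u n, 0)) + lact (0, v) (D (u n, 0)).
      by rewrite lactB subrK.
    rewrite e1; apply: (le_trans (Re_normD _ _)); apply: lerD.
      exact: (HMl (0, v) (y - D (u n, 0))).
    rewrite I2; apply: (le_trans (Re_normB _ _)).
    rewrite Re_normZ.
    have h1 := thb (u n).
    have h2 := HMr (u n, 0) w; rewrite /= n0U addr0 in h2.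
    have r0 := Re_norm_ge0 w.
    have t0 : 0 <= complex.Re `|theta (u n)|.
      by move: (normr_ge0 (theta (u n))); rewrite lecE => /andP[].
    rewrite /C2 realify_normE.
    nra.
  apply: Re_le0_eq0.
  apply: (cvgr_to_ge (cvg_lin0 Cv C2 a0 b0)); apply: nearW => n.
  have e1 : ract y (0, v) = ract (y - D (u n, 0)) (0, v) + ract (D (u n, 0)) (0, v).
    by rewrite ractB subrK.
  rewrite e1; apply: (le_trans (Re_normD _ _)); apply: lerD.
    exact: (HMr (0, v) (y - D (u n, 0))).
  rewrite I1; apply: (le_trans (Re_normB _ _)).
  rewrite Re_normZ.
  have h1 := thb (u n).
  have h2 := HMl (u n, 0) w; rewrite /= n0U addr0 in h2.
  have r0 := Re_norm_ge0 w.
  have t0 : 0 <= complex.Re `|theta (u n)|.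
    by move: (normr_ge0 (theta (u n))); rewrite lecE => /andP[].
  rewrite /C2 realify_normE.
  nra.
have [M0 [M00 HM0]] := closed_graph CGh.
move=> x; apply/cvgrPdist_lt => eps eps0.
have e0 : 0 < complex.Re eps by move: eps0; rewrite ltcE => /andP[].
have epsE : eps = (complex.Re eps)%:C.
  move: eps0; rewrite ltcE => /andP[/eqP Hi _].
  have Hi' : complex.Im eps = 0 by rewrite Hi.
  by rewrite [LHS]complexE Hi' mulr0 addr0.
have pos : (0 : R[i]) < (complex.Re eps / M0)%:C.
  by rewrite -(rmorph0 (real_complex R)) ltcR divr_gt0.
apply/nbhs_ballP; exists ((complex.Re eps / M0)%:C) => //.
move=> t; rewrite -ball_normE /= (normC_real (x - t)) ltcR => Ht.
have -> : D (x, 0) - D (t, 0) = L (x - t) by rewrite linearB.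
rewrite epsE; apply: norm_ltC.
apply: (le_lt_trans (HM0 _)); rewrite realify_normE.
by rewrite mulrC -ltr_pdivlMr.
Qed.
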